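(* Let $n\ge2$ and let $g_1,\dots,g_r\in\mathbb R[X_1,\dots,X_n]$ satisfy $1-\|\mathbf X\|_2^2\in\mathcal Q(\mathbf g)$ and $\|g_i\|\le\tfrac12$ for all $i$. Let $\mathfrak c\ge1,\textit{Ł}\ge1$ satisfy $D(x)^{\textit{Ł}}\le\mathfrak c\,G(x)$ on $[-1,1]^n$, let $\gamma(n,\mathbf g)\ge1$ be a constant depending only on $n,\mathbf g$ such that every $h$ with $\min_S h>0$ lies in $\mathcal Q_\ell(\mathbf g)$ whenever $\ell\ge\gamma(n,\mathbf g)\,d(h)^{3.5n\textit{Ł}}\epsilon(h)^{-2.5n\textit{Ł}}$, and put $\gamma'(n,\mathbf g)=3^{2.5n\textit{Ł}}\gamma(n,\mathbf g)$. Let $f\in\mathbb R[\mathbf X]$ with $f\ge0$ on $S$, $f^*=\min_Sf$, and $0<\epsilon\le\|f\|$. Then $f^*-f^*_{\mathrm{SoS},\ell}\le\epsilon$ for every $$\ell\ge\gamma'(n,\mathbf g)\,d(f)^{3.5n\textit{Ł}}\,\|f\|^{2.5n\textit{Ł}}\,\epsilon^{-2.5n\textit{Ł}}.$$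
   Context: $\Sigma^2$ sums of squares; $S=\{x:g_i(x)\ge0\ \forall i\}$ (nonempty); $\mathcal Q(\mathbf g)=\Sigma^2+\sum_i\Sigma^2g_i$; $\mathcal Q_\ell(\mathbf g)=\{s_0+\sum_is_ig_i: s_j\in\Sigma^2,\deg s_0\le\ell,\deg(s_ig_i)\le\ell\}$; $\|h\|=\max_{[-1,1]^n}|h|$; $d(h)=\deg h$; $\epsilon(h)=\min_Sh/\|h\|$; $G(x)=|\min\{g_1(x),\dots,g_r(x),0\}|$, $D(x)=\operatorname{dist}(x,S)$. The SoS relaxation value of order $\ell$ is $f^*_{\mathrm{SoS},\ell}=\sup\{\lambda\in\mathbb R: f-\lambda\in\mathcal Q_{2\ell}(\mathbf g)\}$. *)

(* Defs.v *)
From HB Require Import structures.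
From mathcomp Require Import all_boot all_order all_algebra.
From mathcomp Require Import boolp classical_sets reals exp.
From mathcomp Require Import mpoly.
Set Implicit Arguments. Unset Strict Implicit. Unset Printing Implicit Defensive.
Import Order.TTheory GRing.Theory Num.Theory.
Local Open Scope ring_scope.
Local Open Scope classical_set_scope.

Section Defs.
Variables (R : realType) (n : nat).
Notation poly := {mpoly R[n]}.

Definition cube : set ('I_n -> R) := [set x | forall i, -1 <= x i <= 1].

Definition supnorm (h : poly) : R := sup [set `|h.@[x]| | x in cube].

(* d(h) = total degree (msize p = 1 + degree) *)
Definition deg (h : poly) : nat := (msize h).-1.

Definition is_sos (p : poly) : Prop :=
  exists s : seq poly, p = \sum_(q <- s) q ^+ 2.

Variables (r : nat) (g : 'I_r -> poly).

Definition semialg : set ('I_n -> R) := [set x | forall i, 0 <= (g i).@[x]].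

Definition inQ (p : poly) : Prop :=
  exists (s0 : poly) (s : 'I_r -> poly),
    [/\ is_sos s0, (forall i, is_sos (s i)) & p = s0 + \sum_(i < r) s i * g i].

(* truncated quadratic module Q_l(g): deg s0 <= l, deg (s_i g_i) <= l *)
Definition inQl (l : nat) (p : poly) : Prop :=
  exists (s0 : poly) (s : 'I_r -> poly),
    [/\ is_sos s0, (forall i, is_sos (s i)),
        (msize s0 <= l.+1)%N, (forall i, (msize (s i * g i) <= l.+1)%N)
      & p = s0 + \sum_(i < r) s i * g i].

Definition minS (h : poly) : R := inf [set h.@[x] | x in semialg].

Definition epsh (h : poly) : R := minS h / supnorm h.

Definition Gfun (x : 'I_n -> R) : R := `| \big[Num.min/0]_(i < r) (g i).@[x] |.

Definition Dfun (x : 'I_n -> R) : R :=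
  inf [set Num.sqrt (\sum_(i < n) (x i - y i) ^+ 2) | y in semialg].

Definition fsos (f : poly) (l : nat) : R :=
  sup [set lam : R | inQl (2 * l) (f - lam%:MP)].

End Defs.

(* Main.v *)
Require Import Defs.
From HB Require Import structures.
From mathcomp Require Import all_boot all_order all_algebra.
From mathcomp Require Import boolp classical_sets reals exp.
From mathcomp Require Import mpoly.
From mathcomp Require Import ring lra zify.
Import Order.TTheory GRing.Theory Num.Theory.
Local Open Scope ring_scope.
Local Open Scope classical_set_scope.

Section H.
Variables (R : realType) (n : nat) (r : nat) (g : 'I_r -> {mpoly R[n]}).

Lemma sos_ge0 (p : {mpoly R[n]}) x : is_sos p -> 0 <= p.@[x].
Proof.
move=> [s ->]; rewrite rmorph_sum; apply: sumr_ge0 => q _.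
by rewrite rmorphXn sqr_ge0.
Qed.

Lemma inQ_ge0 p x : inQ g p -> semialg g x -> 0 <= p.@[x].
Proof.
move=> [s0 [s [h0 hs ->]]] hx; rewrite mevalD rmorph_sum.
apply: addr_ge0; first exact: sos_ge0.
apply: sumr_ge0 => i _; rewrite rmorphM; apply: mulr_ge0; first exact: sos_ge0.
exact: hx.
Qed.

Lemma inQl_ge0 l p x : inQl g l p -> semialg g x -> 0 <= p.@[x].
Proof.
move=> [s0 [s [h0 hs _ _ ->]]] hx; rewrite mevalD rmorph_sum.
apply: addr_ge0; first exact: sos_ge0.
apply: sumr_ge0 => i _; rewrite rmorphM; apply: mulr_ge0; first exact: sos_ge0.
exact: hx.
Qed.

Lemma S_cube x : inQ g (1 - \sum_(i < n) 'X_i ^+ 2) -> semialg g x -> cube x.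
Proof.
move=> hb hx; have := inQ_ge0 _ _ hb hx.
rewrite mevalB meval1 rmorph_sum.
under eq_bigr do rewrite rmorphXn; rewrite /=.
under eq_bigr do rewrite mevalXU.
move=> h i.
have : x i ^+ 2 <= \sum_(j < n) x j ^+ 2.
  rewrite (bigD1 i) //= lerDl; apply: sumr_ge0 => j _; exact: sqr_ge0.
move=> hi.
have h1 : x i ^+ 2 <= 1 by lra.
rewrite expr2 in h1.
apply/andP; split; nra.
Qed.

Lemma deg_shift (f : {mpoly R[n]}) c : (deg (f - c%:MP) <= deg f)%N.
Proof.
rewrite /deg.
have h := msizeD_le f (- c%:MP).
rewrite msizeN msizeC in h.
have : (nat_of_bool (c != 0%R) <= 1)%N by case: (c != 0%R).

lia.
Qed.
End H.

Theorem mainTheorem5 (R : realType) (n : nat) (hn : (2 <= n)%N)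
  (r : nat) (g : 'I_r -> {mpoly R[n]})
  (hS : semialg g !=set0)
  (hball : inQ g (1 - \sum_(i < n) 'X_i ^+ 2))
  (hg : forall i, supnorm (g i) <= 1 / 2)
  (c L : R) (hc : 1 <= c) (hL : 1 <= L)
  (hDG : forall x, cube x -> powR (Dfun g x) L <= c * Gfun g x)
  (gamma : R) (hgamma1 : 1 <= gamma)
  (hgamma : forall (h : {mpoly R[n]}) (l : nat), 0 < minS g h ->
     gamma * powR (deg h)%:R (7 / 2 * n%:R * L)
           * powR (epsh g h) (- (5 / 2 * n%:R * L)) <= l%:R ->
     inQl g l h)
  (f : {mpoly R[n]}) (hf : forall x, semialg g x -> 0 <= f.@[x])
  (eps : R) (heps : 0 < eps) (hepsf : eps <= supnorm f) :
  forall l : nat,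
    powR 3 (5 / 2 * n%:R * L) * gamma
      * powR (deg f)%:R (7 / 2 * n%:R * L)
      * powR (supnorm f) (5 / 2 * n%:R * L)
      * powR eps (- (5 / 2 * n%:R * L)) <= l%:R ->
    minS g f - fsos g f l <= eps.
Proof.
move=> l hl.
set a := 5 / 2 * n%:R * L in hl hgamma *.
set b := 7 / 2 * n%:R * L in hl hgamma *.
have n0 : 0 < n%:R :> R by rewrite ltr0n; lia.
have a0 : 0 < a by rewrite /a; apply: mulr_gt0; [apply: mulr_gt0|]; lra.
have b0 : 0 < b by rewrite /b; apply: mulr_gt0; [apply: mulr_gt0|]; lra.
case: hS => x0 hx0.
have cx0 := @S_cube _ _ _ _ x0 hball hx0.
set F := supnorm f in hl hepsf *.
have hsupf : has_sup [set `|f.@[x]| | x in cube (n:=n)].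
  apply: contrapT => hns.
  have : F = 0 by rewrite /F /supnorm; exact: sup_out.
  lra.
have hfx : forall x, cube x -> `|f.@[x]| <= F.
  move=> x cx; apply: (ub_le_sup hsupf.2); by exists x.
set fs := minS g f.
have lbf : has_lbound [set f.@[x] | x in semialg g].
  by exists 0 => _ [x hx <-]; exact: hf.
have fs_le : forall x, semialg g x -> fs <= f.@[x].
  move=> x hx; apply: (ge_inf lbf); by exists x.
have fs0 : 0 <= fs.
  apply: lb_le_inf; first by exists (f.@[x0]), x0.
  by move=> _ [x hx <-]; exact: hf.
have fsF : fs <= F.
  apply: (le_trans (fs_le _ hx0)); apply: (le_trans (ler_norm _)); exact: hfx.
set h := f - (fs - eps)%:MP.
have hev : forall x, h.@[x] = f.@[x] - fs + eps.
  by move=> x; rewrite /h mevalB mevalC; ring.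
have mh : eps <= minS g h.
  apply: lb_le_inf; first by exists (h.@[x0]), x0.
  move=> _ [x hx <-]; rewrite hev; have := fs_le _ hx; lra.
have hub : forall x, cube x -> `|h.@[x]| <= 3 * F.
  move=> x cx; rewrite hev; have := hfx _ cx; rewrite !ler_norml => /andP[h1 h2].
  apply/andP; split; lra.
have sh3 : supnorm h <= 3 * F.
  apply: ge_sup; first by exists (`|h.@[x0]|), x0.
  by move=> _ [x cx <-]; exact: hub.
have she : eps <= supnorm h.
  have : `|h.@[x0]| <= supnorm h.
    apply: (ub_le_sup); first by exists (3 * F) => _ [x cx <-]; exact: hub.
    by exists x0.
  apply: le_trans; apply: (le_trans _ (ler_norm _)); rewrite hev; have := fs_le _ hx0; lra.
have F0 : 0 < F by lra.
have epsh_pos : 0 < epsh g h by rewrite /epsh; apply: divr_gt0; lra.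
have key : eps <= epsh g h * 3 * F.
  rewrite /epsh.
  have sh0 : 0 < supnorm h by lra.
  have -> : minS g h / supnorm h * 3 * F = minS g h * ((3 * F) / supnorm h) by field; lra.
  have : 1 <= (3 * F) / supnorm h by rewrite ler_pdivlMr // mul1r.
  move=> h1; have : minS g h <= minS g h * (3 * F / supnorm h).
    by rewrite ler_peMr //; lra.
  lra.
have pow_bound : powR (epsh g h) (- a) <= powR 3 a * powR F a * powR eps (- a).
  rewrite !powRN.
  set P := powR (epsh g h) a; set pe := powR eps a; set Q := powR 3 a * powR F a.
  have P0 : 0 < P by apply: powR_gt0.
  have pe0 : 0 < pe by apply: powR_gt0.
  have e1 : powR (epsh g h * 3 * F) a = P * Q.
    have h1 : 0 <= epsh g h * 3 by apply: mulr_ge0; lra.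
    rewrite powRM //; last by lra.
    rewrite powRM; [|lra|lra].
    by rewrite /P /Q mulrA.
  have hPQ : pe <= P * Q.
    rewrite -e1; apply: ge0_ler_powR; rewrite ?nnegrE; try lra.
  rewrite -subr_ge0.
  have -> : Q * pe^-1 - P^-1 = (P * Q - pe) / (P * pe) by field; apply/andP; split; lra.
  apply: divr_ge0; first lra.
  by apply: mulr_ge0; lra.
have degb : powR (deg h)%:R b <= powR (deg f)%:R b.
  apply: ge0_ler_powR; rewrite ?nnegrE ?ler0n ?ler_nat //; first lra.
  exact: deg_shift.
have inh : inQl g (2 * l) h.
  apply: hgamma; first lra.
  apply: le_trans (le_trans _ hl) _.
    have -> : powR 3 a * gamma * powR (deg f)%:R b * powR F a * powR eps (- a)
      = gamma * powR (deg f)%:R b * (powR 3 a * powR F a * powR eps (- a)).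
      by rewrite -!mulrA mulrCA; congr (_ * _); rewrite mulrCA.
    apply: ler_pM.
    - by apply: mulr_ge0; [lra| apply: powR_ge0].
    - exact: powR_ge0.
    - by apply: ler_wpM2l => //; lra.
    - exact: pow_bound.
  by rewrite ler_nat leq_pmull.
have ub : has_ubound [set lam : R | inQl g (2 * l) (f - lam%:MP)].
  exists (f.@[x0]) => lam hlam.
  have := @inQl_ge0 _ _ _ g _ _ x0 hlam hx0; rewrite mevalB mevalC; lra.
have : fs - eps <= fsos g f l by apply: (ub_le_sup ub).
lra.
Qed.
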